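(* Let $B$ be an irreducible $n\times n$ $\mathrm{SDDM}_0$-matrix whose upper-triangular part contains exactly $n-1+j$ non-zero off-diagonal entries (so $B$ has $2(n-1+j)$ non-zero off-diagonal entries), and let $A_1$ (of dimension $n_1$) be obtained from $B$ by the elimination process described in the context. Then: (a) if $n_1\ge1$, $A_1$ is an irreducible $\mathrm{SDDM}_0$-matrix, and $A_1$ is singular if and only if $B$ is singular; (b) if the graph of non-zero entries of $B$ is planar, then so is that of $A_1$; (c) if $n_1\ge1$, then $n_1\le 2j-2$ and $A_1$ has at most $2(3j-3)$ non-zero off-diagonal entries.
   Context: A matrix is $\mathrm{SDDM}_0$ if it is real, symmetric, weakly diagonally dominant and has non-positive off-diagonal entries; irreducible means its graph of non-zero entries is connected, where the graph of non-zero entries of a symmetric matrix $M$ has vertex set the indices and an edge $\{i,j\}$ ($i\neq j$) iff $M_{ij}\neq0$. Elimination process: starting with the current matrix $M=B$, as long as some index $i$ has at most two non-zero off-diagonal entries in its row of $M$, eliminate it: if $M$ has dimension at least $2$, replace $M$ by the Schur complement of $M$ with respect to the diagonal entry $M_{ii}$ (i.e. remove row and column $i$ and subtract $M_{\cdot i}M_{i\cdot}/M_{ii}$ from the rest); if $M$ has dimension $1$, delete it (leaving an empty matrix, $n_1=0$). The process stops when every row of $M$ has at least three non-zero off-diagonal entries; $A_1$ is the final matrix. *)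

(* Defs.v *)
From HB Require Import structures.
From mathcomp Require Import all_boot all_order all_algebra.
From mathcomp Require Import all_classical all_reals all_analysis.
From Stdlib Require Import Relation_Operators.
Set Implicit Arguments.
Unset Strict Implicit.
Unset Printing Implicit Defensive.
Import Order.TTheory GRing.Theory Num.Theory.
Import numFieldNormedType.Exports.
Local Open Scope ring_scope.

Section Defs.
Variable R : realType.

Definition nzgraph n (M : 'M[R]_n) : rel 'I_n :=
  fun i j => (i != j) && (M i j != 0).

Definition irreducible n (M : 'M[R]_n) : Prop :=
  forall i j : 'I_n, connect (nzgraph M) i j.

Definition SDDM0 n (M : 'M[R]_n) : Prop :=
  [/\ M^T = M,
      (forall i : 'I_n, \sum_(j < n | j != i) `|M i j| <= M i i)
    & (forall i j : 'I_n, i != j -> M i j <= 0)].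

Definition singular n (M : 'M[R]_n) : Prop := \det M = 0.

Definition nnz_upper n (M : 'M[R]_n) : nat :=
  #|[set p : 'I_n * 'I_n | (p.1 < p.2)%N && (M p.1 p.2 != 0)]|.

Definition nnz_offdiag n (M : 'M[R]_n) : nat :=
  #|[set p : 'I_n * 'I_n | (p.1 != p.2) && (M p.1 p.2 != 0)]|.

Definition row_offdeg n (M : 'M[R]_n) (i : 'I_n) : nat :=
  #|[set j : 'I_n | (j != i) && (M i j != 0)]|.

(* Schur complement of M w.r.t. the diagonal entry M i i: remove row and
   column i and subtract M_{.i} M_{i.} / M_{ii}.  For n = 0 (M of dimension 1)
   this is the empty matrix, i.e. deleting M. *)
Definition schur_del n (M : 'M[R]_n.+1) (i : 'I_n.+1) : 'M[R]_n :=
  \matrix_(k, l) (M (lift i k) (lift i l)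
                  - M (lift i k) i * M i (lift i l) / M i i).

Definition smat := {n : nat & 'M[R]_n}.

Inductive elim_step : smat -> smat -> Prop :=
| ElimStep n (M : 'M[R]_n.+1) (i : 'I_n.+1) :
    (row_offdeg M i <= 2)%N ->
    elim_step (existT _ n.+1 M) (existT _ n (schur_del M i)).

Definition elim_final n (M : 'M[R]_n) : Prop :=
  forall i : 'I_n, (3 <= row_offdeg M i)%N.

Definition elim_result n (B : 'M[R]_n) n1 (A1 : 'M[R]_n1) : Prop :=
  clos_refl_trans smat elim_step (existT _ n B) (existT _ n1 A1)
  /\ elim_final A1.

Definition unit_itv : set R := fun t => 0 <= t <= 1.

(* planarity of a (symmetric, irreflexive) graph on a finite vertex type:
   vertices are drawn as distinct points of the plane R x R, each edge as a
   simple continuous arc joining its endpoints, avoiding other vertices, and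
   arcs of distinct edges meet only at common endpoints. *)
Definition planar (V : finType) (e : rel V) : Prop :=
  exists (pos : V -> R * R) (arc : V -> V -> R -> R * R),
    injective pos /\
    (forall u v, e u v ->
       [/\ {within unit_itv, continuous (arc u v)}%classic,
           arc u v 0 = pos u, arc u v 1 = pos v,
           (forall s t, unit_itv s -> unit_itv t ->
              arc u v s = arc u v t -> s = t)
         & (forall w t, 0 < t < 1 -> arc u v t != pos w)]) /\
    (forall u v u' v', e u v -> e u' v' ->
       ~ ((u = u' /\ v = v') \/ (u = v' /\ v = u')) ->
       forall s t, unit_itv s -> unit_itv t -> arc u v s = arc u' v' t ->
         (s == 0) || (s == 1)).

End Defs.

(* Main.v *)
Require Import Defs.
From mathcomp Require Import all_boot all_order all_algebra.
From mathcomp Require Import all_classical all_reals all_analysis.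
From mathcomp Require Import ring lra zify.
From Stdlib Require Import Relation_Operators.
Import Order.TTheory GRing.Theory Num.Theory.
Import numFieldNormedType.Exports.
Local Open Scope ring_scope.
Set Implicit Arguments.
Unset Strict Implicit.
Unset Printing Implicit Defensive.
Local Open Scope classical_set_scope.
Section Draw.
Variable R : realType.
Variables (V : finType) (e : rel V) (pos : V -> R * R) (arc : V -> V -> R -> R * R).
Hypothesis pinj : injective pos.
Hypothesis harc : forall u v, e u v ->
       [/\ {within (@unit_itv R), continuous (arc u v)}%classic,
           arc u v 0 = pos u, arc u v 1 = pos v,
           (forall s t, unit_itv s -> unit_itv t ->
              arc u v s = arc u v t -> s = t)
         & (forall w t, 0 < t < 1 -> arc u v t != pos w)].
Hypothesis hdis : forall u v u' v', e u v -> e u' v' ->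
       ~ ((u = u' /\ v = v') \/ (u = v' /\ v = u')) ->
       forall s t, unit_itv s -> unit_itv t -> arc u v s = arc u' v' t ->
         (s == 0) || (s == 1).

Lemma arc_pos u v w t : e u v -> unit_itv t -> arc u v t = pos w ->
  (t = 0 /\ w = u) \/ (t = 1 /\ w = v).
Proof.
move=> euv /andP [t0 t1] h.
have [_ a0 a1 _ av] := harc euv.
case: (eqVneq t 0) h => [-> h|tn0 h].
  by left; split => //; apply: pinj; rewrite -h a0.
case: (eqVneq t 1) h => [-> h|tn1 h].
  by right; split => //; apply: pinj; rewrite -h a1.
have : 0 < t < 1 by rewrite !lt_def tn0 t0 eq_sym tn1 t1.
by move/(av w); rewrite h eqxx.
Qed.

Lemma arc_disj u v u' v' s t : e u v -> e u' v' ->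
  ~ ((u = u' /\ v = v') \/ (u = v' /\ v = u')) -> unit_itv s -> unit_itv t ->
  arc u v s = arc u' v' t -> s = 0 \/ s = 1.
Proof.
move=> h1 h2 h3 hs ht h; have := hdis h1 h2 h3 hs ht h.
by case/orP => /eqP; [left|right].
Qed.
End Draw.

Section An.
Variable R : realType.
Lemma within_comp_aff (U : topologicalType) (A B : set R) (g : R -> U) (p : R -> R) :
  {within B, continuous g} -> continuous p -> (forall x, A x -> B (p x)) ->
  {within A, continuous (g \o p)}.
Proof.
move=> cg cp AB.
have /subspace_continuousP cg' := cg.
apply/subspace_continuousP => x Ax.
apply: (@cvg_comp _ _ _ p g _ (within B (nbhs (p x)))); last exact: (cg' (p x) (AB x Ax)).
move=> W; rewrite /within /= => h.
have := cp x _ h.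
rewrite nbhs_simpl /=.
apply: filterS => y /= H Ay; exact: H (AB y Ay).
Qed.

Definition glue {U : Type} (f g : R -> U) (t : R) :=
  if t <= 2^-1 then f (2 * t) else g (2 * t - 1).

Lemma glue_cont (U : topologicalType) (f g : R -> U) :
  {within (@unit_itv R), continuous f} -> {within (@unit_itv R), continuous g} ->
  f 1 = g 0 -> {within (@unit_itv R), continuous (glue f g)}.
Proof.
move=> cf cg fg.
have -> : @unit_itv R = `[0, 2^-1] `|` `[2^-1, 1].
  rewrite /unit_itv; apply/seteqP; split => t /=.
    move=> /andP[t0 t1]; case: (lerP t 2^-1) => ht; [left|right]; rewrite /= in_itv /=.
      by rewrite t0 ht.
    by rewrite t1 ltW.
  rewrite !in_itv /= => -[] /andP[h1 h2]; apply/andP; split => //.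
  - by apply: le_trans h2 _; rewrite invf_le1 // ler1n.
  - by apply: le_trans h1.
apply: withinU_continuous; [exact: itv_closed | exact: itv_closed | |].
- apply: (@subspace_eq_continuous _ _ _ (f \o ( *%R 2))).
    by move=> t; rewrite inE /= in_itv /= /glue /from_subspace => /andP[_ ->].
  apply: within_comp_aff cf _ _.
    exact: mulrl_continuous.
  move=> t; rewrite /= in_itv /= => /andP[h1 h2]; rewrite /unit_itv.
  rewrite mulr_ge0 //=. 
  by rewrite -(@ler_pM2l _ 2^-1) // mulrA mulVf // mul1r mulr1.
- apply: (@subspace_eq_continuous _ _ _ (g \o (fun t => 2 * t - 1))).
    move=> t; rewrite inE /= in_itv /= /glue /from_subspace => /andP[h1 h2].
    case: ifP => // h3.
    have -> : t = 2^-1 by apply/eqP; rewrite eq_le h3 h1.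
    by rewrite mulfV // subrr -fg.
  apply: within_comp_aff cg _ _.
    move=> x; apply: continuousB; [exact: mulrl_continuous | exact: cst_continuous].
  move=> t; rewrite /= in_itv /= => /andP[h1 h2]; rewrite /unit_itv.
  apply/andP; split; lra.
Qed.


Lemma I2 (s : R) : unit_itv s -> s <= 2^-1 -> unit_itv (2 * s).
Proof. by rewrite /unit_itv => /andP [h1 h2] h3; apply/andP; split; lra. Qed.

Lemma I2' (s : R) : unit_itv s -> 2^-1 < s -> unit_itv (2 * s - 1).
Proof. by rewrite /unit_itv => /andP [h1 h2] h3; apply/andP; split; lra. Qed.

Local Close Scope classical_set_scope.
Lemma pigeon2 (T : finType) (A : {set T}) x y z : x \in A -> y \in A -> z \in A ->
  x != y -> (#|A| <= 2)%N -> z = x \/ z = y.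
Proof.
move=> xA yA zA xy hA.
have [->|zx] := eqVneq z x; first by left.
have [->|zy] := eqVneq z y; first by right.
have : (#|[set x; y]| + 1 <= #|A|)%N.
  rewrite (cardsD1 z A) zA add1n addnC ltnS.
  apply: subset_leq_card; apply/fintype.subsetP => w; rewrite !inE.
  case/orP => /eqP ->; rewrite ?xA ?yA andbT.
    by rewrite eq_sym.
  by rewrite eq_sym.
by rewrite cards2 xy; lia.
Qed.

Lemma planar_contract n (e : rel 'I_n.+1) (e' : rel 'I_n) (v : 'I_n.+1) :
  (forall x y, e x y -> e y x) ->
  (forall a b, e' a b -> (a != b) &&
     (e (lift v a) (lift v b) || (e (lift v a) v && e v (lift v b)))) ->
  (#|[set x | e v x]| <= 2)%N ->
  planar R e -> planar R e'.
Proof.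
move=> esy he' hdeg [pos [arc [pinj [harc hdis]]]].
pose L := lift v.
have Lnv : forall a, L a != v by move=> a; rewrite eq_sym neq_lift.
have Linj : injective L by apply: lift_inj.
exists (fun a => pos (L a)).
exists (fun a b => if e (L a) (L b) then arc (L a) (L b)
                   else glue (arc (L a) v) (arc v (L b))).
split; [|split].
- by move=> x y /pinj /Linj.
- move=> a b /he' /andP [ab hE].
  case: (boolP (e (L a) (L b))) => [E|nE].
    by have [c a0 a1 ai av] := harc _ _ E; split => // w t ht; exact: av.
  have /andP [G1 G2] : e (L a) v && e v (L b) by move: hE; rewrite (negbTE nE).
  have [c1 a10 a11 ai1 av1] := harc _ _ G1.
  have [c2 a20 a21 ai2 av2] := harc _ _ G2.
  have cross : forall s t, unit_itv s -> s <= 2^-1 -> unit_itv t -> 2^-1 < t ->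
      arc (L a) v (2 * s) <> arc v (L b) (2 * t - 1).
    move=> s t hs hs' ht ht' h.
    have ne : ~ ((L a = v /\ v = L b) \/ (L a = L b /\ v = v)).
      case=> -[h3 h4].
        by move: (Lnv a); rewrite h3 eqxx.
      by move: ab; rewrite -(inj_eq Linj) h3 eqxx.
    have [h0|h1] := arc_disj hdis G1 G2 ne (I2 hs hs') (I2' ht ht') h.
    - move: h; rewrite h0 a10 => /esym /(arc_pos pinj harc G2 (I2' ht ht')).
      case=> -[_ /eqP]; first by rewrite (negbTE (Lnv a)).
      by rewrite (inj_eq Linj) (negbTE ab).
    - move: h; rewrite h1 a11 => /esym /(arc_pos pinj harc G2 (I2' ht ht')).
      case=> -[h3 h4]; first by move: ht'; lra.
      by move: (Lnv b); rewrite -h4 eqxx.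
  split.
  + by apply: glue_cont => //; rewrite a11 a20.
  + by rewrite /glue ifT ?mulr0 // invr_ge0 ler0n.
  + rewrite /glue ifF; first by rewrite mulr1 (_ : 2 - 1 = 1) //; lra.
    by apply/negbTE; rewrite -ltNge; lra.
  + move=> s t hs ht; rewrite /glue.
    case: (lerP s 2^-1) => hs'; case: (lerP t 2^-1) => ht' h.
    * by have := ai1 _ _ (I2 hs hs') (I2 ht ht') h; lra.
    * by exfalso; apply: (cross s t).
    * by exfalso; apply: (cross t s) => //; rewrite h.
    * by have := ai2 _ _ (I2' hs hs') (I2' ht ht') h; lra.
  + move=> w; suff H : forall t : R, 0 < t < 1 ->
        glue (arc (L a) v) (arc v (L b)) t != pos (L w) by move=> t; exact: H.
    move=> t /andP [t0 t1]; apply/eqP; rewrite /glue.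
    have ht : unit_itv t by apply/andP; split; lra.
    case: (lerP t 2^-1) => ht' h.
    * case: (arc_pos pinj harc G1 (I2 ht ht') h) => -[h3 h4]; first by clear -h3 t0; lra.
      by move: (Lnv w); rewrite h4 eqxx.
    * case: (arc_pos pinj harc G2 (I2' ht ht') h) => -[h3 h4]; first by clear -h3 ht'; lra.
      by clear -h3 t1; lra.
- move=> a b a' b' /he' /andP [ab hE] /he' /andP [ab' hE'] hne s t hs ht.
  have hneL : ~ ((L a = L a' /\ L b = L b') \/ (L a = L b' /\ L b = L a')).
    by case=> -[/Linj h1 /Linj h2]; apply: hne; [left|right].
  case: (boolP (e (L a) (L b))) => [E|nE]; case: (boolP (e (L a') (L b'))) => [E'|nE'] h.
  + exact: (hdis _ _ _ _ E E' hneL _ _ hs ht h).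
  + have /andP [G1' G2'] : e (L a') v && e v (L b') by move: hE'; rewrite (negbTE nE').
    move: h; rewrite /glue; case: (lerP t 2^-1) => ht' h.
      apply: (hdis _ _ _ _ E G1' _ _ _ hs (I2 ht ht') h).
      by case=> -[h1 h2]; [move: (Lnv b) | move: (Lnv a)]; rewrite ?h1 ?h2 eqxx.
    apply: (hdis _ _ _ _ E G2' _ _ _ hs (I2' ht ht') h).
    by case=> -[h1 h2]; [move: (Lnv a) | move: (Lnv b)]; rewrite ?h1 ?h2 eqxx.
  + have /andP [G1 G2] : e (L a) v && e v (L b) by move: hE; rewrite (negbTE nE).
    move: h; rewrite /glue; case: (lerP s 2^-1) => hs' h.
      have ne : ~ ((L a = L a' /\ v = L b') \/ (L a = L b' /\ v = L a')).
        by case=> -[h1 h2]; [move: (Lnv b') | move: (Lnv a')]; rewrite -h2 eqxx.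
      have [h0|h1] := arc_disj hdis G1 E' ne (I2 hs hs') ht h.
        by apply/orP; left; apply/eqP; clear -h0; lra.
      have [_ _ a11 _ _] := harc _ _ G1.
      move: h; rewrite h1 a11 => /esym /(arc_pos pinj harc E' ht).
      by case=> -[_ h2]; [move: (Lnv a') | move: (Lnv b')]; rewrite -h2 eqxx.
    have ne : ~ ((v = L a' /\ L b = L b') \/ (v = L b' /\ L b = L a')).
      by case=> -[h1 h2]; [move: (Lnv a') | move: (Lnv b')]; rewrite -h1 eqxx.
    have [h0|h1] := arc_disj hdis G2 E' ne (I2' hs hs') ht h.
      by exfalso; clear -h0 hs'; lra.
    by apply/orP; right; apply/eqP; clear -h1; lra.
  + have /andP [G1 G2] : e (L a) v && e v (L b) by move: hE; rewrite (negbTE nE).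
    have /andP [G1' G2'] : e (L a') v && e v (L b') by move: hE'; rewrite (negbTE nE').
    have inN : forall x, e x v -> x \in [set x | e v x] by move=> x /esy; rewrite inE.
    have inN' : forall x, e v x -> x \in [set x | e v x] by move=> x; rewrite inE.
    have Lab : L a != L b by rewrite (inj_eq Linj).
    have Lab' : L a' != L b' by rewrite (inj_eq Linj).
    have [h1|h1] := pigeon2 (inN _ G1) (inN' _ G2) (inN _ G1') Lab hdeg;
    have [h2|h2] := pigeon2 (inN _ G1) (inN' _ G2) (inN' _ G2') Lab hdeg.
    * by move: Lab'; rewrite h1 h2 eqxx.
    * by exfalso; apply: hneL; left.
    * by exfalso; apply: hneL; right.
    * by move: Lab'; rewrite h1 h2 eqxx.
Qed.

End An.

Local Close Scope classical_set_scope.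
Section Alg.
Variable R : realType.

Lemma schur_eq0 (a b c d : R) : a <= 0 -> b <= 0 -> c <= 0 -> 0 < d ->
  (a - b * c / d == 0) = (a == 0) && (b * c == 0).
Proof.
move=> a0 b0 c0 d0.
have bc : 0 <= b * c / d := divr_ge0 (mulr_le0 b0 c0) (ltW d0).
rewrite naddr_eq0 // ?oppr_le0 // oppr_eq0 mulf_eq0 invr_eq0 (gt_eqF d0) orbF.
by [].
Qed.

Lemma schur_le (a b c d : R) : a <= 0 -> b <= 0 -> c <= 0 -> 0 < d ->
  a - b * c / d <= 0.
Proof.
move=> a0 b0 c0 d0.
have bc : 0 <= b * c / d := divr_ge0 (mulr_le0 b0 c0) (ltW d0).
by rewrite lerBlDr add0r (le_trans a0).
Qed.

Lemma dom_ineq (SA SC b ck d Mkk : R) : 0 < d -> 0 <= b -> 0 <= ck ->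
  b + SA <= Mkk -> ck + SC <= d -> SA + b / d * SC <= Mkk - b * ck / d.
Proof.
move=> d0 b0 ck0 h1 h2.
have q0 : 0 <= b / d by rewrite divr_ge0 // ltW.
have qd : b / d * d = b by rewrite divfK // gt_eqF.
have -> : b * ck / d = b / d * ck by rewrite mulrAC.
move: q0 qd; set q := b / d => q0 qd.
nra.
Qed.

Lemma sum_lift n (F : 'I_n.+1 -> R) (v : 'I_n.+1) (k : 'I_n) :
  \sum_(j < n.+1 | j != lift v k) F j = F v + \sum_(l < n | l != k) F (lift v l).
Proof.
rewrite (bigD1_ord v) ?neq_lift //=.
by congr (_ + _); apply: eq_bigl => l; rewrite (inj_eq (@lift_inj _ v)).
Qed.

Lemma sum_lift0 n (F : 'I_n.+1 -> R) (v : 'I_n.+1) :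
  \sum_(j < n.+1 | j != v) F j = \sum_(l < n) F (lift v l).
Proof.
have h1 : \sum_(j < n.+1) F j = F v + \sum_(l < n) F (lift v l).
  by rewrite (bigD1_ord v).
rewrite (bigD1 v) // in h1.
by move/addrI: h1.
Qed.

Lemma symE n (M : 'M[R]_n) : M^T = M -> forall i j, M i j = M j i.
Proof. by move=> h i j; rewrite -{1}h mxE. Qed.


Section Step.
Variables (n : nat) (M : 'M[R]_n.+1) (v : 'I_n.+1).
Hypotheses (hS : SDDM0 M) (hI : irreducible M) (hn : (0 < n)%N).
Let S := schur_del M v.
Local Notation L := (lift v).

Lemma Msym i j : M i j = M j i.
Proof. by case: hS => h _ _; apply: symE. Qed.

Lemma Mod0 i j : i != j -> M i j <= 0.
Proof. by case: hS => _ _ h; apply: h. Qed.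

Lemma Mdom i : \sum_(j < n.+1 | j != i) `|M i j| <= M i i.
Proof. by case: hS => _ h _; apply: h. Qed.

Lemma exists_nb : exists x, nzgraph M v x.
Proof.
have /connectP [p pp lp] := hI v (L (Ordinal hn)).
case: p pp lp => [|x p] /=.
  by move=> _ /eqP; rewrite eq_sym (negbTE (neq_lift _ _)).
by case/andP=> h _ _; exists x.
Qed.

Lemma Mvv_pos : 0 < M v v.
Proof.
have [x /andP[vx Mx]] := exists_nb.
apply: (lt_le_trans _ (Mdom v)).
rewrite (bigD1 x) 1?eq_sym //=.
apply: ltr_pwDl; first by rewrite normr_gt0.
by apply: sumr_ge0 => i _.

Qed.

Lemma Sentry k l : S k l = M (L k) (L l) - M (L k) v * M v (L l) / M v v.
Proof. by rewrite mxE. Qed.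

Lemma Lneqv k : (L k != v).
Proof. by rewrite eq_sym neq_lift. Qed.

Lemma S_eq0 k l : k != l ->
  (S k l == 0) = (M (L k) (L l) == 0) && ((M (L k) v == 0) || (M v (L l) == 0)).
Proof.
move=> kl; rewrite Sentry schur_eq0 ?mulf_eq0 //.
- by apply: Mod0; rewrite (inj_eq (@lift_inj _ v)).
- exact/Mod0/Lneqv.
- by apply: Mod0; rewrite eq_sym Lneqv.
- exact: Mvv_pos.
Qed.

Lemma nzgraphS k l : nzgraph S k l =
  (k != l) && (nzgraph M (L k) (L l) || (nzgraph M (L k) v && nzgraph M v (L l))).
Proof.
rewrite /nzgraph (inj_eq (@lift_inj _ v)).
have -> : (L k != v) = true := Lneqv k.
have -> : (v != L l) = true := neq_lift v l.
case: eqP => //= /eqP kl.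
by rewrite S_eq0 // negb_and negb_or.
Qed.

Lemma SDDM0_S : SDDM0 S.
Proof.
have d0 := Mvv_pos.
split.
- apply/matrixP => k l; rewrite !mxE.
  rewrite (Msym (L l) (L k)) (Msym (L l) v) (Msym v (L k)).
  by rewrite [M v _ * _]mulrC.
- move=> k.
  set d := M v v.
  set b := `|M (L k) v|.
  have Sabs : forall l, l != k -> `|S k l| = `|M (L k) (L l)| + b * `|M v (L l)| / d.
    move=> l lk.
    have lk' : L l != L k by rewrite (inj_eq (@lift_inj _ v)).
    rewrite ler0_norm; last first.
      rewrite Sentry; apply: schur_le => //.
      - by apply: Mod0; rewrite eq_sym.
      - exact/Mod0/Lneqv.
      - by apply: Mod0; rewrite eq_sym Lneqv.
    rewrite Sentry /b !ler0_norm; first by ring.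
    - by apply: Mod0; rewrite eq_sym Lneqv.
    - exact/Mod0/Lneqv.
    - by apply: Mod0; rewrite eq_sym.
  rewrite (eq_bigr _ Sabs) big_split /=.
  under [X in _ + X]eq_bigr do rewrite mulrAC.
  rewrite -mulr_sumr.
  have rowk := Mdom (L k); rewrite sum_lift in rowk.
  have rowv := Mdom v; rewrite sum_lift0 (bigD1 k) //= in rowv.
  have -> : S k k = M (L k) (L k) - b * `|M v (L k)| / d.
    rewrite Sentry /b !ler0_norm ?mulrNN //.
    - by apply: Mod0; rewrite eq_sym Lneqv.
    - exact/Mod0/Lneqv.
  by apply: dom_ineq => //; rewrite /b.
- move=> k l kl; rewrite Sentry; apply: schur_le.
  - by apply: Mod0; rewrite (inj_eq (@lift_inj _ v)).
  - exact/Mod0/Lneqv.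
  - by apply: Mod0; rewrite eq_sym Lneqv.
  - exact: Mvv_pos.
Qed.


Lemma nzgraph_sym i j : nzgraph M i j = nzgraph M j i.
Proof. by rewrite /nzgraph eq_sym Msym. Qed.

Lemma irr_S : irreducible S.
Proof.
move=> k l.
pose a : {pred 'I_n.+1} := [pred y | [exists k', ((y == L k') ||
   ((y == v) && nzgraph M v (L k'))) && connect (nzgraph S) k k']].
have dir : forall x y, nzgraph M x y -> x \in a -> y \in a.
  move=> x y xy /existsP [k1 /andP [/orP [/eqP xk | /andP [/eqP xk vk1]] ck1]]; subst x.
  - case: (unliftP v y) xy => [k2 ->|->] xy.
      apply/existsP; exists k2; rewrite eqxx /=.
      apply: (connect_trans ck1); apply: connect1.
      rewrite nzgraphS xy andbT.
      by apply: contraNneq (proj1 (andP xy)) => ->.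
    apply/existsP; exists k1; rewrite eqxx /= ck1 andbT.
    by rewrite nzgraph_sym xy orbT.
  - case: (unliftP v y) xy => [k2 ->|->] xy; last by move: xy; rewrite /nzgraph eqxx.
    apply/existsP; exists k2; rewrite eqxx /=.
    have [<-//|k12] := eqVneq k1 k2.
    apply: (connect_trans ck1); apply: connect1.
    by rewrite nzgraphS k12 /= xy andbT [nzgraph M (L k1) v]nzgraph_sym vk1 orbT.
have cl : fingraph.closed (nzgraph M) a.
  move=> x y xy; apply/idP/idP; first exact: dir.
  by apply: dir; rewrite nzgraph_sym.
have := closed_connect cl (hI (L k) (L l)).
have -> : L k \in a by apply/existsP; exists k; rewrite eqxx connect0.
move/esym/existsP => [k' /andP [/orP [/eqP /lift_inj -> //|]]].
by rewrite (negbTE (Lneqv l)).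
Qed.

Lemma det_schur : \det M = M v v * \det S.
Proof.
pose c (x : 'I_n.+1) := if x == v then 0 else M x v / M v v.
pose C : 'M[R]_n.+1 := \matrix_(x, y) ((y == v)%:R * c x).
pose E : 'M[R]_n.+1 := 1%:M - C.
have CM : forall x y, (C *m M) x y = c x * M v y.
  move=> x y; rewrite mxE (bigD1 v) //= big1 ?addr0; first by rewrite mxE eqxx mul1r.
  by move=> j jv; rewrite mxE (negbTE jv) mul0r mul0r.
have detE : \det E = 1.
  rewrite (expand_det_row _ v) (bigD1 v) //= big1 ?addr0.
    rewrite !mxE eqxx /c eqxx mulr0 subr0 mul1r /cofactor.
    rewrite -signr_odd addnn odd_double expr0 mul1r.
    have -> : row' v (col' v E) = 1%:M.
      apply/matrixP => x y; rewrite !mxE (inj_eq (@lift_inj _ v)).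
      by rewrite (negbTE (Lneqv y)) mul0r subr0.
    exact: det1.
  move=> j jv; rewrite !mxE (negbTE jv) /c eqxx mulr0 subr0 eq_sym (negbTE jv).
  by rewrite mul0r.
have : \det (E *m M) = \det M by rewrite det_mulmx detE mul1r.
rewrite /E mulmxBl mul1mx => <-.
set CMM := C *m M in CM *.
have EMe : forall x y, (M - CMM) x y = M x y - c x * M v y by move=> x y; rewrite -CM !mxE.
rewrite (expand_det_col _ v) (bigD1 v) //= big1 ?addr0.
  rewrite EMe /c eqxx mul0r subr0 /cofactor -signr_odd addnn odd_double expr0 mul1r.
  congr (_ * \det _); apply/matrixP => x y.
  rewrite [LHS]mxE [LHS]mxE EMe Sentry /c.
  by rewrite (negbTE (Lneqv x)) mulrAC.
move=> x xv; rewrite EMe /c (negbTE xv) divfK ?subrr ?mul0r //.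
by rewrite gt_eqF // Mvv_pos.
Qed.


Lemma count_S : (row_offdeg M v <= 2)%N ->
  (nnz_offdiag S + 2 <= nnz_offdiag M)%N.
Proof.
move=> hdeg.
pose N := [set x | nzgraph M v x].
have hN : #|N| = row_offdeg M v.
  by rewrite /row_offdeg; apply: eq_card => x; rewrite !inE eq_sym.
have N1 : (1 <= #|N|)%N.
  have [x hx] := exists_nb; rewrite card_gt0; apply/set0Pn; exists x; by rewrite inE.
rewrite -hN in hdeg.
pose PS := [set p : 'I_n * 'I_n | (p.1 != p.2) && (S p.1 p.2 != 0)].
pose PM := [set p : 'I_n.+1 * 'I_n.+1 | (p.1 != p.2) && (M p.1 p.2 != 0)].
pose f (p : 'I_n * 'I_n) := (L p.1, L p.2).
have finj : injective f.
  move=> [a b] [c d] e; have e1 := congr1 fst e; have e2 := congr1 snd e.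
  by rewrite /f /= in e1 e2; rewrite (lift_inj e1) (lift_inj e2).
pose Vp := [set p in PM | (p.1 == v) || (p.2 == v)].
pose Ex := [set p : 'I_n.+1 * 'I_n.+1 | [&& p.1 \in N, p.2 \in N & p.1 != p.2]].
have c1 : (f @: PS) \subset ((PM :\: Vp) :|: Ex).
  apply/fintype.subsetP => q /imsetP [[a b] /=]; rewrite inE => /= hab ->.
  have := hab; rewrite -/(nzgraph S a b) nzgraphS => /andP [ab /orP [h|/andP [h1 h2]]].
    rewrite !inE /= -/(nzgraph M (L a) (L b)) h /= negb_or Lneqv Lneqv.
    by [].
  by rewrite !inE /= h2 (inj_eq (@lift_inj _ v)) ab nzgraph_sym h1 /= orbT.
have c2 : (2 * #|N| <= #|Vp|)%N.
  pose A1 := [set (v, x) | x in N].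
  pose A2 := [set (x, v) | x in N].
  have -> : (2 * #|N| = #|A1 :|: A2|)%N.
    rewrite cardsU !card_imset; last by move=> x y [].
      have -> : A1 :&: A2 = finset.set0.
        apply/setP => [[x y]]; rewrite !inE.
        apply/negbTE/negP => /andP [/imsetP [z zN [-> ->]] /imsetP [w wN [e1 e2]]].
        by move: zN; rewrite inE e2 /nzgraph eqxx.
      by rewrite cards0 subn0 mul2n addnn.
    by move=> x y [].
  apply: subset_leq_card; apply/fintype.subsetP => q.
  rewrite !inE => /orP [] /imsetP [x xN ->]; move: xN; rewrite inE => /andP [vx Mx].
    by rewrite /= eqxx /= vx Mx.
  by rewrite /= eqxx orbT /= eq_sym vx -Msym Mx.
have c3 : (#|Ex| <= #|N| * #|N| - #|N|)%N.
  pose D := [set (x, x) | x in N].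
  have DX : D \subset finset.setX N N.
    by apply/fintype.subsetP => q /imsetP [x xN ->]; move: xN; rewrite !inE /= => ->.
  have -> : (#|N| * #|N| - #|N| = #|finset.setX N N :\: D|)%N.
    rewrite cardsD cardsX (finset.setIidPr DX) card_imset //.
    by move=> x y [].
  apply: subset_leq_card; apply/fintype.subsetP => [[x y]]; rewrite !inE /=.
  case/and3P => xN yN xy; rewrite xN yN andbT andbT.
  by apply/imsetP => -[z _ [e1 e2]]; move: xy; rewrite e1 e2 eqxx.
have c4 : (#|Vp| <= #|PM|)%N.
  by apply: subset_leq_card; apply/fintype.subsetP => q; rewrite inE => /andP [].
have : (#|PS| <= #|PM| - #|Vp| + #|Ex|)%N.
  rewrite -(card_imset _ finj).
  apply: (leq_trans (subset_leq_card c1)).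
  rewrite cardsU cardsD (finset.setIidPr _) ?leq_subr //.
  by apply/fintype.subsetP => q; rewrite inE => /andP [].
rewrite /nnz_offdiag -/PS -/PM.
move: c2 c3 c4 N1 hdeg.
case: #|N| => [|[|[|d]]] //=; lia.
Qed.

End Step.
End Alg.

Section Main.
Variable R : realType.

Lemma planar0 (e : rel 'I_0) : planar R e.
Proof.
exists (fun _ => (0, 0)), (fun _ _ _ => (0, 0)).
by split; [case|split; case].
Qed.

Lemma step_planar n (M : 'M[R]_n.+1) v : SDDM0 M -> irreducible M ->
  (row_offdeg M v <= 2)%N -> planar R (nzgraph M) ->
  planar R (nzgraph (schur_del M v)).
Proof.
move=> hS hI hdeg pM.
case: (posnP n) => hn.
  subst n; exact: planar0.
apply: (planar_contract (e := nzgraph M) (v := v)) => //.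
- by move=> x y; rewrite (nzgraph_sym hS).
- by move=> a b; rewrite (nzgraphS v hS hI hn).
- rewrite (_ : #|_| = row_offdeg M v) //.
  by rewrite /row_offdeg; apply: eq_card => x; rewrite !inE eq_sym.
Qed.

Definition Inv n (B : 'M[R]_n) (s : smat R) : Prop :=
  let: existT m M := s in
  ((1 <= m)%N -> [/\ SDDM0 M, irreducible M, (\det M = 0 <-> \det B = 0)
                   & (nnz_offdiag M + 2 * n <= nnz_offdiag B + 2 * m)%N])
  /\ (planar R (nzgraph B) -> planar R (nzgraph M)).

Lemma inv_step n (B : 'M[R]_n) s t : elim_step s t -> Inv B s -> Inv B t.
Proof.
case=> m M i hdeg [H1 H2].
have [hS hI hdet hc] := H1 isT.
split; last by move=> pB; apply: step_planar => //; exact: H2.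
move=> hm.
split.
- exact: SDDM0_S.
- exact: irr_S.
- have hd := det_schur i hS hI hm.
  split => h0.
    by apply/hdet; rewrite hd h0 mulr0.
  move/hdet: h0; rewrite hd => /eqP; rewrite mulf_eq0 => /orP [/eqP h|/eqP //].
  by move: (Mvv_pos i hS hI hm); rewrite h ltxx.
- have := count_S hS hI hm hdeg; lia.
Qed.

Lemma inv_crt n (B : 'M[R]_n) s t : clos_refl_trans _ (@elim_step R) s t ->
  Inv B s -> Inv B t.
Proof.
elim=> [x y h|x|x y z _ h1 _ h2]; first exact: inv_step.
- by [].
- by move=> h; apply: h2; apply: h1.
Qed.

Lemma offdiag_sum n (M : 'M[R]_n) : nnz_offdiag M = (\sum_i row_offdeg M i)%N.
Proof.
rewrite /nnz_offdiag /row_offdeg -sum1_card big_mkcond /=.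
under [RHS]eq_bigr do rewrite -sum1_card big_mkcond /=.
rewrite pair_big /=; apply: eq_bigr => -[i j] _; rewrite !inE /= eq_sym //.
Qed.

Lemma deg_final n (M : 'M[R]_n) : elim_final M -> (3 * n <= nnz_offdiag M)%N.
Proof.
move=> hf; rewrite offdiag_sum.
have -> : (3 * n = \sum_(i < n) 3)%N by rewrite sum_nat_const card_ord mulnC.
by apply: leq_sum => i _; apply: hf.
Qed.

Lemma offdiag_upper n (M : 'M[R]_n) : M^T = M ->
  nnz_offdiag M = (2 * nnz_upper M)%N.
Proof.
move=> hsym.
pose U := [set p : 'I_n * 'I_n | (p.1 < p.2)%N && (M p.1 p.2 != 0)].
pose sw (p : 'I_n * 'I_n) := (p.2, p.1).
have swK : involutive sw by case.
have swinj : injective sw := inv_inj swK.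
pose Lo := sw @^-1: U.
rewrite /nnz_offdiag.
have -> : [set p : 'I_n * 'I_n | (p.1 != p.2) && (M p.1 p.2 != 0)] = U :|: Lo.
  apply/finset.setP => -[a b]; rewrite !inE /= -(symE hsym a b) neq_ltn.
  by rewrite andb_orl.
rewrite cardsU card_preimset // (_ : U :&: Lo = finset.set0) ?cards0 ?subn0.
  by rewrite /nnz_upper -/U addnn mul2n.
apply/finset.setP => -[a b]; rewrite !inE /=.
by case: (ltngtP a b) => //; rewrite andbF.
Qed.

End Main.

Theorem proposition4p1 (R : realType) (n : nat) (B : 'M[R]_n) (j : int)
    (n1 : nat) (A1 : 'M[R]_n1) :
  SDDM0 B -> irreducible B ->
  (nnz_upper B)%:Z = n%:Z - 1 + j ->
  elim_result B A1 ->
  [/\ ((1 <= n1)%N ->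
         [/\ SDDM0 A1, irreducible A1 & (singular A1 <-> singular B)]),
      (planar R (nzgraph B) -> planar R (nzgraph A1))
    & ((1 <= n1)%N ->
         n1%:Z <= 2 * j - 2 /\
         (nnz_offdiag A1)%:Z <= 2 * (3 * j - 3))].
Proof.
move=> hS hI hup [hcrt hfin].
have I0 : Inv B (existT _ n B) by split => // _; split.
have [H1 H2] := inv_crt hcrt I0.
split => //.
- by move=> hn1; have [? ? ? _] := H1 hn1; split.
- move=> hn1; have [hS1 _ _ hc] := H1 hn1.
  have hoff := offdiag_upper (let: And3 h _ _ := hS in h).
  have h3 := deg_final hfin.
  move: hup; rewrite hoff in hc; clear -hc h3 hn1.
  move=> hup; split; lia.
Qed.
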